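(* Let $X$ be a nonempty set, let $(Y,\|\cdot,\cdot\|)$ be a linear $2$-normed space of dimension $d$ with $2\le d<\infty$, and let $\mathcal I\subset 2^{\mathbb N}$ be an admissible ideal. Let $f,f_n:X\to Y$ ($n\in\mathbb N$). If $\{f_n\}$ is $\mathcal I$-uniformly convergent to $f$, then $\{f_n\}$ is $\mathcal I$-equal convergent to $f$.
   Context: A $2$-norm on a real vector space $Y$ of dimension $d$, $2\le d<\infty$, is a function $\|\cdot,\cdot\|:Y\times Y\to\mathbb R$ such that: $\|x,y\|=0$ iff $x,y$ are linearly dependent; $\|x,y\|=\|y,x\|$; $\|\alpha x,y\|=|\alpha|\,\|x,y\|$ for $\alpha\in\mathbb R$; $\|x+y,z\|\le\|x,z\|+\|y,z\|$. An ideal $\mathcal I\subset 2^{\mathbb N}$ is a family closed under finite unions and subsets; it is admissible if it is proper ($\mathbb N\notin\mathcal I$) and contains all singletons. A real sequence $\{a_n\}$ is $\mathcal I$-convergent to $a$ ($\mathcal I\text{-}\lim a_n=a$) if for every $\varepsilon>0$, $\{n:|a_n-a|\ge\varepsilon\}\in\mathcal I$. $\{f_n\}$ is $\mathcal I$-uniformly convergent to $f$ if for every $\varepsilon>0$ there is $A\in\mathcal I$ such that $\|f_n(x)-f(x),z\|<\varepsilon$ for all $n\in\mathbb N\setminus A$, all $x\in X$ and all $z\in Y$. $\{f_n\}$ is $\mathcal I$-equal convergent to $f$ if there is a sequence $\{\varepsilon_n\}$ of positive reals with $\mathcal I\text{-}\lim\varepsilon_n=0$ such that for every $x\in X$ and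 every $z\in Y$, the set $\{n\in\mathbb N:\|f_n(x)-f(x),z\|\ge\varepsilon_n\}\in\mathcal I$. *)

(* Defs.v *)
From mathcomp Require Import all_boot all_order all_algebra.
From mathcomp Require Import reals.
Set Implicit Arguments. Unset Strict Implicit. Unset Printing Implicit Defensive.
Import Order.TTheory GRing.Theory Num.Theory.
Local Open Scope ring_scope.

Definition is_2norm (R : realType) (Y : vectType R) (N : Y -> Y -> R) : Prop :=
  [/\ (forall x y : Y, N x y = 0 <-> ~~ free [:: x; y]),
      (forall x y : Y, N x y = N y x),
      (forall (a : R) (x y : Y), N (a *: x) y = `|a| * N x y) &
      (forall x y z : Y, N (x + y) z <= N x z + N y z)].

Definition is_ideal (I : (nat -> Prop) -> Prop) : Prop :=
  (forall A B, I A -> I B -> I (fun n => A n \/ B n)) /\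
  (forall A B : nat -> Prop, I A -> (forall n, B n -> A n) -> I B).

Definition admissible (I : (nat -> Prop) -> Prop) : Prop :=
  [/\ is_ideal I, ~ I (fun _ => True) & forall k : nat, I (fun n => n = k)].

Definition I_lim (R : realType) (I : (nat -> Prop) -> Prop) (a : nat -> R) (l : R) : Prop :=
  forall eps : R, 0 < eps -> I (fun n => eps <= `|a n - l|).

Definition I_uniform_conv (R : realType) (Y : vectType R) (N : Y -> Y -> R)
  (I : (nat -> Prop) -> Prop) (X : Type) (fn : nat -> X -> Y) (f : X -> Y) : Prop :=
  forall eps : R, 0 < eps -> exists A : nat -> Prop, I A /\
    forall n, ~ A n -> forall (x : X) (z : Y), N (fn n x - f x) z < eps.

Definition I_equal_conv (R : realType) (Y : vectType R) (N : Y -> Y -> R)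
  (I : (nat -> Prop) -> Prop) (X : Type) (fn : nat -> X -> Y) (f : X -> Y) : Prop :=
  exists e : nat -> R, (forall n, 0 < e n) /\ I_lim I e 0 /\
    forall (x : X) (z : Y), I (fun n => e n <= N (fn n x - f x) z).

(* Main.v *)
Require Import Defs.
From mathcomp Require Import all_boot all_order all_algebra.
From mathcomp Require Import reals.
From mathcomp Require Import boolp.
From Stdlib Require Import Classical.
Import Order.TTheory GRing.Theory Num.Theory.
Local Open Scope ring_scope.

Theorem mainTheorem4 (R : realType) (X : Type) (Y : vectType R)
  (N : Y -> Y -> R) (I : (nat -> Prop) -> Prop)
  (fn : nat -> X -> Y) (f : X -> Y) :
  inhabited X ->
  (2 <= \dim (fullv : {vspace Y}))%N ->
  is_2norm N ->
  admissible I ->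
  I_uniform_conv N I fn f ->
  I_equal_conv N I fn f.
Proof.
move=> _ _ _ [[IU IS] _ I1] Hu.
have Ifin : forall K, I (fun n => (n < K)%N).
  elim=> [|K IH].
    by apply: (IS _ _ (I1 0%N)) => n.
  apply: (IS _ _ (IU _ _ IH (I1 K))) => n /=.
  rewrite ltnS leq_eqVlt => /orP[/eqP->|]; by [right|left].
pose C (k : nat) (n : nat) := exists x z,
  (k.+1%:R)^-1 <= N (fn n x - f x) z.
have IC : forall k, I (C k).
  move=> k.
  have [A [IA HA]] := Hu ((k.+1%:R)^-1) ltac:(by rewrite invr_gt0 ltr0n).
  apply: (IS _ _ IA) => n [x [z Hxz]].
  apply: NNPP => nA.
  by have := HA n nA x z; rewrite ltNge Hxz.
pose c k n := `[< ~ C k n >].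
pose m n := (\max_(k < n.+1 | c k n) k.+1)%N.
pose e n : R := ((maxn (m n) 1)%:R)^-1.
have mP : forall n, m n = 0%N \/ exists k, ~ C k n /\ m n = k.+1.
  move=> n; rewrite /m.
  apply: (big_ind (fun v => v = 0%N \/ exists k, ~ C k n /\ v = k.+1)).
  - by left.
  - move=> a b Ha Hb /=; case: (leqP a b) => ab.
      by [].
    by [].
  - move=> i /asboolP ci; right; by exists i.
exists e; split; [|split].
- move=> n; rewrite /e invr_gt0 ltr0n; exact: leq_maxr.
- move=> eps eps0.
  set K := Num.Def.archi_bound (eps^-1).
  have HK : eps^-1 < K%:R by apply: archi_boundP; rewrite invr_ge0 ltW.
  apply: (IS _ _ (IU _ _ (Ifin K) (IC K))) => n /=.
  rewrite subr0 => Hn.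
  case: (leqP K n) => Kn; last by left.
  right; apply: NNPP => nC.
  have cK : c K n by apply/asboolP.
  have := leq_bigmax_cond (F := fun k : 'I_n.+1 => k.+1) (P := fun k : 'I_n.+1 => c k n) (Ordinal (n := n.+1) (m := K) Kn) cK.
  rewrite -/(m n) /= => Km.
  have : `|e n| < eps.
    rewrite ger0_norm; last by rewrite /e invr_ge0 ler0n.
    rewrite /e.
    have mpos : (0 < maxn (m n) 1)%N by rewrite leq_max orbT.
    rewrite -[eps]invrK ltf_pV2 ?posrE ?ltr0n ?invr_gt0 //.
    apply: (lt_le_trans HK); rewrite ler_nat.
    apply: (leq_trans (leqnSn K)); apply: (leq_trans Km); exact: leq_maxl.
  by rewrite ltNge Hn.
- move=> x z.
  apply: (IS _ _ (IC 0%N)) => n Hn.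
  case: (mP n) => [m0|[k [nC mk]]].
    exists x, z; move: Hn; by rewrite /e m0 /= invr1.
  exfalso; apply: nC.
  exists x, z; move: Hn; by rewrite /e mk.
Qed.
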